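(* Let $\nu\in\mathbb{C}$, $k\in\mathbb{N}$, $\epsilon\in\{\pm1\}$, $E_0=-1/(2\epsilon\nu+2k+1)^2$, and $Y(z)=z^{\epsilon\nu+1/2}e^{-\frac{z}{2\epsilon\nu+2k+1}}\,{}_1F_1\!\left(-k,2\epsilon\nu+1,\frac{2z}{2\epsilon\nu+2k+1}\right)$. If there exists $M\in\mathbb{C}(z,E)$, regular at $E=E_0$, with $M(z,E_0)=-Y'(z)/Y(z)$ and $$H(z,E):=4M^2z^2+4z^2E-4M'z^2-4\nu^2+4z+1=O((E-E_0)^2)\quad(E\to E_0),$$ then $2\epsilon\nu+k\in\mathbb{N}$.
   Context: $'$ denotes $\partial/\partial z$. $H$ is the expression under the square root in the eigenfunction form $\psi=z\left(\frac{M}{\sqrt{-4E}}\mathcal{W}((-4E)^{-1/2},\nu,z\sqrt{-4E})+\mathcal{W}'((-4E)^{-1/2},\nu,z\sqrt{-4E})\right)/\sqrt H$, with $\mathcal W(\mu,\nu,z)$ a solution of $y''+\left(-\frac14+\frac{\mu}{z}+\frac{1/4-\nu^2}{z^2}\right)y=0$. $Y$ solves $4z^2Y''+(4E_0z^2+4z-4\nu^2+1)Y=0$. *)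

(* Defs.v *)
(* The complex field is abstracted as an arbitrary
   numClosedFieldType C (C itself is one; the statement is purely algebraic). *)
From HB Require Import structures.
From mathcomp Require Import all_boot all_order all_algebra.
Set Implicit Arguments. Unset Strict Implicit. Unset Printing Implicit Defensive.
Import Order.TTheory GRing.Theory Num.Theory.
Local Open Scope ring_scope.

Section Defs.
Variable C : numClosedFieldType.

Definition fracz (p : {poly C}) : {fraction {poly C}} := FracField.tofrac p.

Definition poch (a : C) (n : nat) : C := \prod_(i < n) (a + i%:R).

(* 1F1(-k, b, x) = sum_{n=0}^k (-k)_n / ((b)_n n!) x^n, a polynomial in x *)
Definition F11negk (k : nat) (b : C) : {poly C} :=
  \poly_(n < k.+1) (poch (- k%:R) n / (poch b n * n`!%:R)).

Definition nden (nu eps : C) (k : nat) : C := 2 * eps * nu + 2 * k%:R + 1.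
Definition E0 (nu eps : C) (k : nat) : C := - 1 / (nden nu eps k) ^+ 2.

Definition Lpoly (nu eps : C) (k : nat) : {poly C} :=
  F11negk k (2 * eps * nu + 1) \Po ((2 / nden nu eps k) *: 'X).

(* Y(z) = z^(eps nu + 1/2) exp(-z/(2 eps nu+2k+1)) L(z);  its logarithmic
   derivative Y'/Y = (eps nu + 1/2)/z - 1/(2 eps nu+2k+1) + L'(z)/L(z),
   an element of C(z). *)
Definition logderY (nu eps : C) (k : nat) : {fraction {poly C}} :=
  fracz (eps * nu + 2^-1)%:P / fracz 'X
  - fracz (1 / nden nu eps k)%:P
  + fracz (Lpoly nu eps k)^`() / fracz (Lpoly nu eps k).

(* Bivariate polynomials C[z,E]: outer variable E, coefficients in C[z].
   A rational function M in C(z,E) is represented as P/Q with P,Q in C[z,E]. *)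
Definition zB : {poly {poly C}} := ('X)%:P.
Definition EB : {poly {poly C}} := 'X.
Definition cB (c : C) : {poly {poly C}} := c%:P%:P.
Definition dz (p : {poly {poly C}}) : {poly {poly C}} := map_poly deriv p.
Definition atE (p : {poly {poly C}}) (e : C) : {poly C} := p.[e%:P].

Definition regular_at (Q : {poly {poly C}}) (e : C) : Prop := atE Q e != 0.

(* For M = P/Q, H = 4 M^2 z^2 + 4 z^2 E - 4 M' z^2 - 4 nu^2 + 4 z + 1
   equals Hnum P Q / Hden Q, using M' = (dz P * Q - P * dz Q)/Q^2. *)
Definition Hnum (nu : C) (P Q : {poly {poly C}}) : {poly {poly C}} :=
  cB 4 * P ^+ 2 * zB ^+ 2
  + (cB 4 * zB ^+ 2 * EB - cB 4 * cB (nu ^+ 2) + cB 4 * zB + 1) * Q ^+ 2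
  - cB 4 * zB ^+ 2 * (dz P * Q - P * dz Q).
Definition Hden (Q : {poly {poly C}}) : {poly {poly C}} := Q ^+ 2.

(* The rational function N/D is O((E-e)^2) as E -> e :
   N/D = (E-e)^2 * (R/S) with R/S in C(z,E) regular at E = e. *)
Definition bigO2_at (N D : {poly {poly C}}) (e : C) : Prop :=
  exists R S : {poly {poly C}}, regular_at S e /\
    N * S = (EB - cB e) ^+ 2 * R * D.

End Defs.

(* Main.v *)
Require Import Defs.
From HB Require Import structures.
From mathcomp Require Import all_boot all_order all_algebra.
From mathcomp Require Import ring zify.
Import Order.TTheory GRing.Theory Num.Theory.
Local Open Scope ring_scope.

Lemma poch0 {C : numClosedFieldType} (x : C) : poch x 0 = 1.
Proof. by rewrite /poch big_ord0. Qed.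

Lemma poch_recl {C : numClosedFieldType} (x : C) n : poch x n.+1 = x * poch (x + 1) n.
Proof.
rewrite /poch big_ord_recl /= addr0; congr (_ * _); apply: eq_bigr => i _.
rewrite /bump /= add1n -natr1; ring.
Qed.

Lemma poch_recr {C : numClosedFieldType} (x : C) n : poch x n.+1 = poch x n * (x + n%:R).
Proof. by rewrite /poch big_ord_recr. Qed.

Lemma poch_add {C : numClosedFieldType} (x : C) m n : poch x (m + n) = poch x m * poch (x + m%:R) n.
Proof.
rewrite /poch big_split_ord /=; congr (_ * _); apply: eq_bigr => i _.
by rewrite /= natrD addrA.
Qed.

Lemma poch_diff {C : numClosedFieldType} (x : C) n :
  poch (x + 1) n.+1 - poch x n.+1 = n.+1%:R * poch (x + 1) n.
Proof. rewrite (poch_recl x) (poch_recr (x + 1)) -natr1; ring. Qed.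

Definition Gs {C : numClosedFieldType} k i (a : C) :=
  \sum_(j < k.+1) (-1)^+j * 'C(k,j)%:R * poch (a + j%:R) i.

Lemma Gs_step {C : numClosedFieldType} k i (a : C) :
  Gs k.+1 i a = Gs k i a - Gs k i (a + 1).
Proof.
rewrite /Gs.
set f := fun j : nat => poch (a + j%:R) i.
have Hf : forall j : nat, poch (a + 1 + j%:R) i = f j.+1.
  by move=> j; rewrite /f -natr1; congr poch; ring.
have E1 : \sum_(j < k.+2) (-1)^+j * 'C(k.+1,j)%:R * f j =
   f 0%N + \sum_(j < k.+1) (-1)^+j.+1 * 'C(k,j.+1)%:R * f j.+1
   - \sum_(j < k.+1) (-1)^+j * 'C(k,j)%:R * f j.+1.
  rewrite big_ord_recl /= bin0 expr0 !mul1r -addrA; congr (_ + _).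
  rewrite -sumrB; apply: eq_bigr => j _.
  rewrite /bump /= add1n binS natrD exprS; ring.
have E2 : \sum_(j < k.+1) (-1)^+j * 'C(k,j)%:R * f j =
   f 0%N + \sum_(j < k.+1) (-1)^+j.+1 * 'C(k,j.+1)%:R * f j.+1.
  rewrite big_ord_recl /= bin0 expr0 !mul1r; congr (_ + _).
  rewrite [RHS]big_ord_recr /= bin_small // mulr0 mul0r addr0.
  by apply: eq_bigr => j _; rewrite /bump /= add1n.
rewrite (eq_bigr (fun j : 'I_k.+2 => (-1)^+j * 'C(k.+1,j)%:R * f j)) //.
rewrite E1 E2; congr (_ - _); apply: eq_bigr => j _; by rewrite Hf.
Qed.

Lemma Gs_formula {C : numClosedFieldType} k i (a : C) :
  Gs k i a = (-1)^+k * (i ^_ k)%:R * poch (a + k%:R) (i - k).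
Proof.
elim: k i a => [|k IH] i a.
  by rewrite /Gs big_ord1 /= !bin0 ffactn0 subn0 !expr0 !mul1r.
rewrite Gs_step; case: i => [|i].
  rewrite ffact0n /= mulr0 mul0r /Gs.
  under eq_bigr do rewrite poch0.
  under [X in _ - X]eq_bigr do rewrite poch0.
  by rewrite subrr.
have -> : Gs k i.+1 a - Gs k i.+1 (a + 1) = - (i.+1%:R * Gs k i (a + 1)).
  rewrite /Gs mulr_sumr -sumrB -sumrN; apply: eq_bigr => j _.
  have -> : a + 1 + j%:R = a + j%:R + 1 by ring.
  rewrite mulrCA -(poch_diff (a + j%:R) i).
  ring.
rewrite IH ffactSS natrM subSS exprS.
have -> : a + 1 + k%:R = a + k.+1%:R by rewrite -natr1; ring.
ring.
Qed.

Lemma size_dz {C : numClosedFieldType} (p : {poly {poly C}}) : (size (dz p) <= size p)%N.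
Proof. exact: size_poly. Qed.

Lemma coef_dz {C : numClosedFieldType} (p : {poly {poly C}}) i : (dz p)`_i = (p`_i)^`().
Proof. by rewrite /dz coef_map_id0 // deriv0. Qed.

Lemma atE_dz {C : numClosedFieldType} (p : {poly {poly C}}) e : atE (dz p) e = (atE p e)^`().
Proof.
rewrite /atE (horner_coef_wide _ (size_dz p)) horner_coef raddf_sum.
apply: eq_bigr => i _; rewrite coef_dz.
by rewrite /= -rmorphXn derivM derivC mulr0 addr0.
Qed.

Lemma deriv_dz {C : numClosedFieldType} (p : {poly {poly C}}) : (dz p)^`() = dz (p^`()).
Proof.
apply/polyP => i; rewrite coef_deriv coef_dz coef_dz coef_deriv.
by rewrite derivMn.
Qed.

Definition H0e {C : numClosedFieldType} (nu e : C) (p q : {poly C}) : {poly C} :=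
  (4:C)%:P * p ^+ 2 * 'X ^+ 2
  + ((4:C)%:P * 'X ^+ 2 * e%:P - (4:C)%:P * (nu ^+ 2)%:P + (4:C)%:P * 'X + 1) * q ^+ 2
  - (4:C)%:P * 'X ^+ 2 * (p^`() * q - p * q^`()).

Definition H1e {C : numClosedFieldType} (nu e : C) (p q p1 q1 : {poly C}) : {poly C} :=
  (4:C)%:P * (2%:R * p * p1) * 'X ^+ 2
  + (4:C)%:P * 'X ^+ 2 * q ^+ 2
  + ((4:C)%:P * 'X ^+ 2 * e%:P - (4:C)%:P * (nu ^+ 2)%:P + (4:C)%:P * 'X + 1) * (2%:R * q * q1)
  - (4:C)%:P * 'X ^+ 2 * (p1^`() * q + p^`() * q1 - p1 * q^`() - p * q1^`()).

Lemma atE_Hnum {C : numClosedFieldType} (nu e : C) P Q :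
  atE (Hnum nu P Q) e = H0e nu e (atE P e) (atE Q e).
Proof.
rewrite /Hnum /H0e /atE /cB /zB /EB !(hornerD, hornerN, hornerM, hornerC, hornerX, horner_exp).
rewrite -!/(atE _ e) !atE_dz /atE.
move: (P.[e%:P]) (Q.[e%:P]) => p q.
move: (p^`()) (q^`()) => p' q'.
ring.
Qed.

Lemma atE_dHnum {C : numClosedFieldType} (nu e : C) P Q :
  atE ((Hnum nu P Q)^`()) e = H1e nu e (atE P e) (atE Q e) (atE P^`() e) (atE Q^`() e).
Proof.
rewrite /Hnum /H1e /cB /zB /EB !derivE !deriv_dz /atE !(hornerD, hornerN, hornerM, hornerC, hornerX, horner_exp).
rewrite -!/(atE _ e) !atE_dz /atE.
ring.
Qed.

Lemma stepA {C : numClosedFieldType} (H S R D : {poly {poly C}}) (e : C) :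
  atE S e != 0 -> H * S = (EB C - cB e) ^+ 2 * R * D ->
  atE H e = 0 /\ atE H^`() e = 0.
Proof.
move=> hS hE.
have h0 : atE H e = 0.
  have := congr1 (fun p => atE p e) hE; rewrite /atE /EB /cB !hornerM.
  rewrite hornerD hornerN hornerX hornerC subrr !mul0r.
  by move/eqP; rewrite mulf_eq0 (negbTE hS) orbF => /eqP.
split => //.
have := congr1 (fun p => atE p^`() e) hE; rewrite /atE /EB /cB !derivM !hornerD !hornerM.
rewrite -/(atE H e) h0 mul0r addr0.
rewrite !(hornerD, hornerM, hornerN, hornerX, hornerC, horner_exp) subrr !(mul0r, mulr0, add0r, addr0).
by move/eqP; rewrite mulf_eq0 (negbTE hS) orbF => /eqP.
Qed.
Lemma stepB {C : numClosedFieldType} (nu e h d : C) (p0 q0 p1 q1 L : {poly C}) :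
 H0e nu e p0 q0 = 0 -> H1e nu e p0 q0 p1 q1 = 0 ->
 p0 * ('X * L) = - q0 * (h%:P * L - d%:P * 'X * L + 'X * L^`()) ->
 'X * (((p1*q0 - p0*q1) * L^+2)^`() * q0^+2 - ((p1*q0 - p0*q1) * L^+2) * (q0^+2)^`())
   + ((2*h)%:P - (2*d)%:P * 'X) * ((p1*q0 - p0*q1) * L^+2) * q0^+2 = 'X * L^+2 * (q0^+2)^+2.
Proof.
move=> h0 h1 e2.
apply/eqP; rewrite -subr_eq0; apply/eqP.
have X4 : (4:C)%:P * 'X ^+ 2 != 0 :> {poly C}.
  rewrite mulf_eq0 negb_or polyC_eq0 pnatr_eq0 /= expf_eq0 /= polyX_eq0 //.
apply: (mulfI X4); rewrite mulr0.
move: h0 h1 e2; rewrite /H0e /H1e !expr2 !(derivM, derivB, derivD, derivN, derivC, derivX).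
move: (p0^`()) (q0^`()) (p1^`()) (q1^`()) (L^`()) => p0' q0' p1' q1' L'.
move=> h0 h1 e2.
lazymatch type of h0 with ?a = 0 =>
lazymatch type of h1 with ?b = 0 =>
lazymatch type of e2 with ?c = ?c' =>
 transitivity (- ('X * q0 * L * L) * (b * q0 - 2%:R * q1 * a)
   + 8%:R * 'X * 'X * q0 * L * (p1 * q0 - p0 * q1) * (c - c')); 
 [ring | rewrite h0 h1 e2 subrr; ring] end end end.
Qed.

Definition EqC {C : numClosedFieldType} (b c : C) (L A B : {poly C}) :=
  'X * (A^`() * B - A * B^`()) + (b%:P - c%:P * 'X) * A * B = 'X * L^+2 * B^+2.

Lemma C1 {C : numClosedFieldType} (b c : C) (L A B : {poly C}) :
  B != 0 -> EqC b c L A B ->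
  exists A1 B1, [/\ B1 != 0, coprimep A1 B1 & EqC b c L A1 B1].
Proof.
move=> hB hE.
set g := gcdp A B.
have gn0 : g != 0 by rewrite gcdp_eq0 negb_and hB orbT.
have hA : A %/ g * g = A := divpK (dvdp_gcdl A B).
have hB' : B %/ g * g = B := divpK (dvdp_gcdr A B).
exists (A %/ g), (B %/ g); split.
- by apply: contra hB => /eqP h; rewrite -hB' h mul0r.
- by apply: coprimep_div_gcd; rewrite hB orbT.
move: hE hA hB'; rewrite /EqC.
move: (A %/ g) (B %/ g) => a1 b1 h hA hB'.
move: h; rewrite -hA -hB' !derivM.
move: (a1^`()) (b1^`()) (g^`()) => a1' b1' g' h.
have g2 : g ^+ 2 != 0 by rewrite expf_eq0 /= (negbTE gn0).
apply: (mulfI g2).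
lazymatch type of h with ?u = ?v =>
 transitivity (u); [ring | rewrite h; ring] end.
Qed.

Lemma C2 {C : numClosedFieldType} (b c : C) (L A B : {poly C}) :
  coprimep A B -> EqC b c L A B -> B %| 'X * B^`().
Proof.
move=> cop hE.
have : B %| A * ('X * B^`()).
  have -> : A * ('X * B^`()) = B * ('X * A^`() + (b%:P - c%:P * 'X) * A - 'X * L^+2 * B).
    move: hE; rewrite /EqC => h.
    lazymatch type of h with ?u = ?v =>
      transitivity (B * ('X * A^`() + (b%:P - c%:P * 'X) * A) - u); [ring | rewrite h; ring] end.
  exact: dvdp_mulr (dvdpp B).
by rewrite Gauss_dvdpr // coprimep_sym.
Qed.

Lemma C3 {C : numClosedFieldType} (B : {poly C}) :
  B != 0 -> B %| 'X * B^`() -> exists (beta : C) (m : nat), beta != 0 /\ B = beta%:P * 'X^m.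
Proof.
move=> hB /dvdpP [t ht].
have st : leq (size t) 1.
  case: (eqVneq t 0) => [->|tn0]; first by rewrite size_poly0.
  have : leq (size ('X * B^`())) (size B).
    case: (eqVneq B^`() 0) => [->|d0]; first by rewrite mulr0 size_poly0.
    rewrite mulrC size_mulX //; exact: lt_size_deriv.
  rewrite ht size_mul //.
  have := polySpred hB; have := polySpred tn0.
  move: (size t) (size B) => x y; case: x => [//|x] _; case: y => [//|y] _ /=; lia.
have ht0 := size1_polyC st.
set t0 := t`_0 in ht0.
have hc : forall j : nat, (j%:R - t0) * B`_j = 0.
  move=> j; have := congr1 (fun p : {poly C} => p`_j) ht; rewrite /= ht0 coefCM coefXM coef_deriv.
  case: j => [|j] /=.
    by move=> h; rewrite mulrBl -h; ring.
  by move=> h; rewrite mulrBl -h -mulr_natl; ring.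
set d := (size B).-1.
have Bd : B`_d != 0 by rewrite -lead_coefE lead_coef_eq0.
have t0d : t0 = d%:R.
  by have := hc d; move/eqP; rewrite mulf_eq0 (negbTE Bd) orbF subr_eq0 => /eqP.
exists B`_d, d; split => //.
apply/polyP => j; rewrite coefCM coefXn.
case: (eqVneq j d) => [->|jd]; first by rewrite mulr1.
rewrite mulr0; have := hc j; move/eqP; rewrite mulf_eq0 t0d subr_eq0 eqr_nat.
by rewrite (negbTE jd) /= => /eqP.
Qed.

Lemma XdXn {C : numClosedFieldType} (m : nat) : 'X * ('X^m)^`() = m%:R * 'X^m :> {poly C}.
Proof.
rewrite derivXn; case: m => [|m] /=; first by rewrite !mulr0n mulr0 mul0r.
by rewrite mulrnAr -exprS mulr_natl.
Qed.

Lemma C4 {C : numClosedFieldType} (b c beta : C) (m : nat) (L A : {poly C}) :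
  beta != 0 -> EqC b c L A (beta%:P * 'X^m) ->
  'X * A^`() + ((b - m%:R)%:P - c%:P * 'X) * A = beta%:P * ('X^(m.+1) * L^+2).
Proof.
move=> hb; rewrite /EqC derivM derivC mul0r add0r => h.
have hD := @XdXn C m.
move: h hD; move: (('X^m)^`()) => D h hD.
have nz : beta%:P * 'X^m != 0 :> {poly C}.
  by rewrite mulf_eq0 polyC_eq0 (negbTE hb) /= expf_eq0 polyX_eq0 andbF.
apply: (mulfI nz).
lazymatch type of h with ?u = ?v =>
lazymatch type of hD with ?u2 = ?v2 =>
 transitivity (u + beta%:P * A * (u2 - v2)); [ring | rewrite h hD subrr (exprS (polyX C) m); ring] end end.
Qed.

Lemma stepC {C : numClosedFieldType} (b c : C) (L A B : {poly C}) : B != 0 -> EqC b c L A B ->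
  exists (m : nat) (A1 : {poly C}) (beta : C), beta != 0 /\
    'X * A1^`() + ((b - m%:R)%:P - c%:P * 'X) * A1 = beta%:P * ('X^(m.+1) * L^+2).
Proof.
move=> hB hE.
have [A1 [B1 [hB1 cop hE1]]] := @C1 C b c L A B hB hE.
have [beta [m [hb eB]]] := @C3 C B1 hB1 (@C2 C b c L A1 B1 cop hE1).
exists m, A1, beta; split => //.
by apply: C4 => //; rewrite -eB.
Qed.
Definition ww {C : numClosedFieldType} (b c : C) (i : nat) := poch b i / c ^+ i.
Definition phiN {C : numClosedFieldType} (N : nat) (b c : C) (p : {poly C}) :=
  \sum_(i < N) p`_i * ww b c i.

Lemma ww_rec {C : numClosedFieldType} (b c : C) i : c != 0 ->
  (b + i%:R) * ww b c i = c * ww b c i.+1.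
Proof.
move=> hc; rewrite /ww poch_recr exprS.
have hci : c ^+ i != 0 by rewrite expf_eq0 (negbTE hc) andbF.
field; by rewrite hci hc.
Qed.

Lemma phi_T {C : numClosedFieldType} (b c : C) (A : {poly C}) N : c != 0 -> (size A < N)%N ->
  phiN N b c ('X * A^`() + (b%:P - c%:P * 'X) * A) = 0.
Proof.
move=> hc hN.
set f := fun j : nat => if j is j'.+1 then c * A`_j' * ww b c j'.+1 else 0.
have -> : phiN N b c ('X * A^`() + (b%:P - c%:P * 'X) * A) = \sum_(i < N) (f i.+1 - f i).
  apply: eq_bigr => i _.
  rewrite coefD mulrBl coefB coefCM -mulrA coefCM !coefXM coef_deriv.
  case: (nat_of_ord i) => [|j] /=.
    rewrite /ww poch0 expr0 divr1 poch_recr poch0 expr1 addr0; field; exact: hc.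
  have e := ww_rec b c j.+1 hc.
  rewrite [c * A`_j.+1 * _]mulrAC -e -mulr_natr; ring.
rewrite -(big_mkord xpredT (fun i => f i.+1 - f i)) telescope_sumr //.
case: N hN => [//|N] hN /=.
rewrite nth_default ?mulr0 ?mul0r ?subr0 //; lia.
Qed.
Lemma sum_dirac {C : numClosedFieldType} K (F : nat -> C) (i : nat) :
  \sum_(l < K) (i == l)%:R * F l = if (i < K)%N then F i else 0.
Proof.
case: ltnP => h.
  rewrite (bigD1 (Ordinal h)) //= eqxx mul1r big1 ?addr0 // => l hl.
  rewrite (_ : (i == l) = false) ?mul0r //; apply: contraNF hl => /eqP e.
  by apply/eqP/val_inj => /=.
rewrite big1 // => l _; rewrite (_ : (i == l) = false) ?mul0r //.
by apply/negbTE; rewrite neq_ltn (leq_trans (ltn_ord l) h) orbT.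
Qed.

Lemma sum_dirac' {C : numClosedFieldType} K (F : nat -> C) (i : nat) :
  \sum_(l < K) ((l : nat) == i)%:R * F l = if (i < K)%N then F i else 0.
Proof. by rewrite -sum_dirac; apply: eq_bigr => l _; rewrite eq_sym. Qed.

Lemma phi_sum {C : numClosedFieldType} N (b c : C) K (F : 'I_K -> {poly C}) :
  phiN N b c (\sum_(i < K) F i) = \sum_(i < K) phiN N b c (F i).
Proof.
rewrite /phiN; under eq_bigr do rewrite coef_sum mulr_suml.
exact: exchange_big.
Qed.

Lemma phiZ {C : numClosedFieldType} N (b c x : C) p :
  phiN N b c (x *: p) = x * phiN N b c p.
Proof.
rewrite /phiN; under eq_bigr do rewrite coefZ -mulrA. by rewrite -mulr_sumr. Qed.

Lemma phiXn {C : numClosedFieldType} N (b c : C) t : (t < N)%N ->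
  phiN N b c 'X^t = ww b c t.
Proof.
move=> h; rewrite /phiN; under eq_bigr do rewrite coefXn.
by rewrite sum_dirac' h.
Qed.

Lemma poly_expand {C : numClosedFieldType} K (L : {poly C}) : (size L <= K)%N ->
  L = \sum_(l < K) L`_l *: 'X^l.
Proof.
move=> hK; apply/polyP => i; rewrite coef_sum.
under eq_bigr do rewrite coefZ coefXn mulrC.
rewrite sum_dirac; case: ltnP => // h.
by rewrite nth_default // (leq_trans hK h).
Qed.

Lemma E1 {C : numClosedFieldType} N (b c : C) K s (L : {poly C}) :
  (size L <= K)%N -> (s + K + K <= N)%N ->
  phiN N b c ('X^s * L^+2) =
  \sum_(l < K) \sum_(j < K) L`_l * L`_j * ww b c (s + l + j).
Proof.
move=> hK hN.
have -> : 'X^s * L^+2 = \sum_(l < K) \sum_(j < K) (L`_l * L`_j) *: 'X^(s + l + j).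
  rewrite expr2 {1 2}(@poly_expand C K L hK) mulr_suml mulr_sumr; apply: eq_bigr => l _.
  rewrite mulr_sumr mulr_sumr; apply: eq_bigr => j _.
  rewrite -!mul_polyC polyCM !exprD; ring.
rewrite (phi_sum N b c K); apply: eq_bigr => l _; rewrite (phi_sum N b c K); apply: eq_bigr => j _.
rewrite phiZ phiXn //.
have := ltn_ord l; have := ltn_ord j; lia.
Qed.

Lemma fact_nz {C : numClosedFieldType} j : (j`!)%:R != 0 :> C.
Proof. by rewrite pnatr_eq0 -lt0n fact_gt0. Qed.

Lemma Qlem {C : numClosedFieldType} (k j : nat) :
  poch (- k%:R) j / (j`!)%:R = (-1)^+j * ('C(k,j))%:R :> C.
Proof.
have -> : poch (- k%:R) j = (-1)^+j * (k ^_ j)%:R :> C.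
  case: (leqP j k) => hj.
    rewrite /poch ffact_prod natr_prod.
    transitivity (\prod_(i < j) ((-1) * ((k - i)%N)%:R : C)).
      apply: eq_bigr => i _; rewrite natrB; last by have := ltn_ord i; lia.
      ring.
    by rewrite big_split /= prodr_const card_ord.
  rewrite ffact_small // mulr0.
  apply/eqP; rewrite /poch prodf_seq_eq0; apply/hasP.
  have hk : (k < j)%N by [].
  exists (Ordinal hk); first by rewrite mem_index_enum.
  by rewrite /= addrC subrr eqxx.
rewrite -bin_ffact natrM; field; exact: fact_nz.
Qed.

Lemma coefComp {C : numClosedFieldType} (F : {poly C}) (c : C) j :
  (F \Po (c *: 'X))`_j = F`_j * c ^+ j.
Proof.
rewrite coef_comp_poly.
rewrite (eq_bigr (fun i : 'I_(size F) => (j == i)%:R * (F`_i * c ^+ i))); last first.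
  by move=> i _; rewrite exprZn coefZ coefXn; ring.
rewrite (sum_dirac (size F) (fun i => F`_i * c ^+ i) j); case: ltnP => // h.
by rewrite nth_default // mul0r.
Qed.

Lemma coefF {C : numClosedFieldType} k (b : C) j :
  (F11negk k b)`_j = if (j < k.+1)%N then poch (- k%:R) j / (poch b j * (j`!)%:R) else 0.
Proof. by rewrite /F11negk coef_poly. Qed.

Lemma sizeL {C : numClosedFieldType} (nu eps : C) k : (size (Lpoly nu eps k) <= k.+1)%N.
Proof.
apply/leq_sizeP => j hj; rewrite /Lpoly coefComp coefF.
by rewrite ltnNge hj /= mul0r.
Qed.

Lemma L0 {C : numClosedFieldType} (nu eps : C) k : (Lpoly nu eps k)`_0 = 1.
Proof. by rewrite /Lpoly coefComp coefF /= !poch0 expr0 mulr1 !mul1r invr1. Qed.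

Lemma poch_nz {C : numClosedFieldType} (a : C) k j : poch a k != 0 -> (j <= k)%N -> poch a j != 0.
Proof.
move=> h hj; move: h; rewrite -(subnKC hj) poch_add mulf_eq0 negb_or => /andP [] //.
Qed.

Definition ellf {C : numClosedFieldType} (k : nat) (a c : C) (j : nat) :=
  poch (- k%:R) j / (poch a j * (j`!)%:R) * c ^+ j.

Lemma Qlem' {C : numClosedFieldType} (k j : nat) :
  poch (- k%:R) j = (-1)^+j * ('C(k,j))%:R * (j`!)%:R :> C.
Proof. by rewrite -Qlem divfK // fact_nz. Qed.

Lemma E2 {C : numClosedFieldType} (k m : nat) (a b c : C) :
  b + m%:R = a -> c != 0 -> poch a k != 0 ->
  \sum_(l < k.+1) \sum_(j < k.+1) ellf k a c l * ellf k a c j * ww b c (m.+1 + l + j)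
  = poch b m / c ^+ m.+1 *
    \sum_(l < k.+1) (poch (- k%:R) l / (poch a l * (l`!)%:R)) * Gs k l.+1 a.
Proof.
move=> hab hc hak.
have hcn : forall n, c ^+ n != 0 by move=> n; rewrite expf_eq0 (negbTE hc) andbF.
rewrite mulr_sumr; apply: eq_bigr => l _.
have inner : \sum_(j < k.+1) ellf k a c j * ww b c (m.+1 + l + j) =
    poch b m / c ^+ m.+1 / c ^+ l * Gs k l.+1 a.
  rewrite /Gs mulr_sumr; apply: eq_bigr => j _.
  have hj : poch a j != 0 by apply: (@poch_nz C a k j hak); rewrite -ltnS.
  rewrite /ww /ellf (_ : (m.+1 + l + j)%N = (m + (j + l.+1))%N); last by lia.
  rewrite poch_add hab poch_add Qlem' !exprD !exprS.
  have := hcn m; have := hcn l; have := hcn j; have := @fact_nz C j.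
  move: (c ^+ m) (c ^+ l) (c ^+ j) => cm cl cj f1 h1 h2 h3.
  field.
  by rewrite h1 h2 h3 hc f1 hj.
under eq_bigr do rewrite -mulrA.
rewrite -mulr_sumr inner.
rewrite /ellf.
have := hcn m; have := hcn l.
rewrite exprS.
move: (c ^+ m) (c ^+ l) => cm cl h1 h2.
field.
have hl : poch a l != 0 by apply: (@poch_nz C a k l hak); rewrite -ltnS.
by rewrite h1 h2 hc hl fact_nz.
Qed.

Lemma ffact_Sn (n : nat) : (n.+1 ^_ n = n.+1`!)%N.
Proof. by have := @ffact_fact n.+1 n (leqnSn n); rewrite subSnn muln1. Qed.

Lemma E3 {C : numClosedFieldType} (k : nat) (a : C) :
  poch a k != 0 -> a + 2 * k%:R != 0 ->
  \sum_(l < k.+1) (poch (- k%:R) l / (poch a l * (l`!)%:R)) * Gs k l.+1 a != 0.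
Proof.
move=> hak han.
case: k hak han => [|k] hak han.
  rewrite big_ord1 /= Gs_formula /= !poch0 ffactn0 subn0 addr0 poch_recr poch0 expr0 addr0 !mul1r.
  by rewrite mulf_neq0 // ?invr_neq0 ?fact_nz //; move: han; rewrite mulr0 addr0.
rewrite big_ord_recr big_ord_recr /= big1; last first.
  move=> l _; rewrite Gs_formula ffact_small ?mulr0 ?mul0r //.
  by rewrite mulr0.
  by have := ltn_ord l; lia.
rewrite add0r !Gs_formula subnn subSnn ffactnn ffactSS ffact_Sn.
rewrite !Qlem' binSn binn !poch0 (poch_recr (a + k.+1%:R)) poch0 mul1r addr0.
have hk : poch a k != 0 by apply: (@poch_nz C a k.+1 k hak).
have hak' : a + k%:R != 0 by move: hak; rewrite poch_recr mulf_eq0 negb_or => /andP [].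
have f1 := @fact_nz C k.+1; have f2 := @fact_nz C k.
rewrite (poch_recr a k) factS natrM.
rewrite -[(-1)^+k]signr_odd !exprS -[(-1)^+k]signr_odd.
move: han; rewrite (_ : a + 2 * k.+1%:R = a + k%:R + (k.+2)%:R); last by rewrite -!natr1; ring.
move=> han.
have f3 : k.+1%:R != 0 :> C by rewrite pnatr_eq0.
set V := (k.+1%:R * k`!%:R) * (a + k%:R + k.+2%:R) / (poch a k * (a + k%:R)).
have hV : V != 0 by rewrite !mulf_neq0 // invr_neq0 // mulf_neq0.
have e2 : k.+2%:R = k.+1%:R + 1 :> C by rewrite -natr1.
have f4 : 1 + k%:R != 0 :> C by rewrite addrC natr1.
case: (odd k); rewrite /= ?expr1 ?expr0 !natrM;
match goal with |- is_true (negb (?e == _)) =>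
  have -> : e = V by (rewrite /V e2; field; rewrite hak' hk f2 f4) end; exact: hV.
Qed.

Lemma poch_eq0 {C : numClosedFieldType} (x : C) n : poch x n = 0 ->
  exists i, (i < n)%N /\ x + i%:R = 0.
Proof.
elim: n => [|n IH]; first by rewrite poch0 => /eqP; rewrite oner_eq0.
rewrite poch_recr => /eqP; rewrite mulf_eq0 => /orP [/eqP /IH [i [hi e]]|/eqP e].
  by exists i; split => //; apply: (ltn_trans hi).
by exists n.
Qed.

Lemma fieldaux (F : fieldType) (p q x l h d l' : F) : q != 0 -> x != 0 -> l != 0 ->
  p / q = -(h / x - d + l' / l) -> p * (x * l) = -q * (h * l - d * x * l + x * l').
Proof.
move=> hq hx hl e.
have -> : p = p / q * q by rewrite divfK.
rewrite e; field; by rewrite hx hl.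
Qed.

Lemma frac_step {C : numClosedFieldType} (nu eps : C) k (p0 q0 : {poly C}) :
  q0 != 0 ->
  fracz p0 / fracz q0 = - logderY nu eps k ->
  p0 * ('X * Lpoly nu eps k) = - q0 * ((eps * nu + 2^-1)%:P * Lpoly nu eps k
     - (1 / nden nu eps k)%:P * 'X * Lpoly nu eps k + 'X * (Lpoly nu eps k)^`()).
Proof.
move=> hq hf.
have Ln : Lpoly nu eps k != 0.
  by apply/eqP => h; have := L0 nu eps k; rewrite h coef0 => /eqP; rewrite eq_sym oner_eq0.
rewrite /logderY in hf.
move: hf Ln; move: (Lpoly nu eps k) (nden nu eps k) => L nd hf Ln.
move: hf; move: ((eps * nu + 2^-1)%:P) ((1 / nd)%:P) => H D hf.
apply/eqP; rewrite -tofrac_eq; apply/eqP.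
rewrite !(rmorphM, rmorphN, rmorphB, rmorphD).
apply: fieldaux hf.
- by rewrite tofrac_eq0.
- by rewrite tofrac_eq0 polyX_eq0.
- by rewrite tofrac_eq0.
Qed.

Lemma coefLe {C : numClosedFieldType} (nu eps : C) k (l : 'I_k.+1) :
  (Lpoly nu eps k)`_l = ellf k (2 * eps * nu + 1) (2 / nden nu eps k) l.
Proof. by rewrite /Lpoly coefComp coefF ltn_ord. Qed.

Theorem mainTheorem14 (C : numClosedFieldType) (nu eps : C) (k : nat) :
  (eps = 1 \/ eps = -1) ->
  nden nu eps k != 0 ->
  (exists P Q : {poly {poly C}},
      regular_at Q (E0 nu eps k) /\
      fracz (atE P (E0 nu eps k)) / fracz (atE Q (E0 nu eps k)) = - logderY nu eps k /\
      bigO2_at (Hnum nu P Q) (Hden Q) (E0 nu eps k)) ->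
  exists n : nat, 2 * eps * nu + k%:R = n%:R.
Proof.
move=> _ hn [P [Q [hreg [hfrac [R [S [hS hE]]]]]]].
move: hreg hfrac hS hE; move: (E0 nu eps k) => e hreg hfrac hS hE.
have [h0 h1] := @stepA C (Hnum nu P Q) S R (Hden Q) e hS hE.
rewrite atE_Hnum in h0; rewrite atE_dHnum in h1.
rewrite /regular_at in hreg.
move: h0 h1 hfrac hreg.
move: (atE P e) (atE Q e) (atE P^`() e) (atE Q^`() e) => p0 q0 p1 q1 h0 h1 hfrac hq.
have hpoly := @frac_step C nu eps k p0 q0 hq hfrac.
have hB := @stepB C nu e _ _ p0 q0 p1 q1 (Lpoly nu eps k) h0 h1 hpoly.
have q2 : q0 ^+ 2 != 0 by rewrite expf_eq0 (negbTE hq) andbF.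
have [m [A1 [beta [hb hA1]]]] := @stepC C _ _ (Lpoly nu eps k) _ (q0^+2) q2 hB.
have two : (2 : C) != 0 by rewrite pnatr_eq0.
set a := 2 * eps * nu + 1.
set c := 2 / nden nu eps k.
have ea : 2 * (eps * nu + 2^-1) = a by rewrite /a; field.
have ec : 2 * (1 / nden nu eps k) = c by rewrite /c; field.
rewrite ea ec in hA1.
have cn : c != 0 by rewrite /c mulf_neq0 // invr_neq0.
set N := (size A1 + m.+1 + k.+1 + k.+1)%N.
have z := @phi_T C (a - m%:R) c A1 N cn ltac:(rewrite /N; lia).
rewrite hA1 mul_polyC phiZ in z.
move/eqP: z; rewrite mulf_eq0 (negbTE hb) /= => /eqP z.
rewrite (@E1 C N (a - m%:R) c k.+1 m.+1 (Lpoly nu eps k) (sizeL nu eps k)) in z; last by rewrite /N; lia.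
move: z.
under eq_bigr => l _ do under eq_bigr => j _ do rewrite !coefLe.
move=> ez; rewrite -/a -/c in ez.
case: (eqVneq (poch (a - m%:R) m) 0) => [hp|hp].
  have [i [hi ei]] := @poch_eq0 C _ _ hp.
  exists (m - i.+1 + k)%N.
  rewrite natrD natrB; last by lia.
  move: ei; rewrite /a => ei.
  apply/eqP; rewrite -subr_eq0; apply/eqP; rewrite -ei -natr1; ring.
case: (eqVneq (poch a k) 0) => [hp2|hp2].
  have [i [hi ei]] := @poch_eq0 C _ _ hp2.
  exists (k - i.+1)%N.
  rewrite natrB; last by lia.
  move: ei; rewrite /a => ei.
  apply/eqP; rewrite -subr_eq0; apply/eqP; rewrite -ei -natr1; ring.
exfalso.
rewrite (@E2 C k m a (a - m%:R) c) in ez; last 3 first.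
- by rewrite subrK.
- exact: cn.
- exact: hp2.
have han : a + 2 * k%:R != 0.
  by move: hn; rewrite /nden /a; apply: contra => /eqP h; apply/eqP; rewrite -h; ring.
move/eqP: ez; rewrite !mulf_eq0 (negbTE hp) invr_eq0 expf_eq0 (negbTE cn) andbF.
by rewrite (negbTE (@E3 C k a hp2 han)).
Qed.
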